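(* Assume $n > 3t+2d$. Then Algorithm 1 implements the MBRB abstraction, i.e. it satisfies MBRB-Validity, MBRB-No-duplication, MBRB-No-duplicity, MBRB-Local-delivery and MBRB-Global-delivery, with $\ell = c-d$. Moreover, if a correct process mbrb-broadcasts an app-message $m$ with sequence number $sn$, then at least $c-d$ correct processes mbrb-deliver $(m,sn)$ from it within 2 communication steps if $d < \frac{c-\lfloor (n+t)/2\rfloor}{\lfloor (n+t)/2\rfloor+1}$, and within 3 communication steps if $d < c-\sqrt{c\cdot\frac{n+t}{2}}$. Finally, the mbrb-broadcast of an app-message by a correct process entails the sending of at most $2n^2$ implementation messages by correct processes.
   Context: System model. There are $n$ asynchronous sequential processes $p_1,\dots,p_n$ with distinct identities $1,\dots,n$ known to all. Up to $t$ processes are Byzantine (they may behave arbitrarily and collude; a crash counts as a Byzantine failure); the others are correct. In a given execution, $c$ denotes the number of correct processes, so $n-t\le c\le n$. Processes communicate over a fully connected asynchronous point-to-point network that never corrupts, duplicates or creates messages. The operation ''broadcast $M$'' by a process means sending the implementation message (imp-message) $M$ to each of the $n$ processes (including itself); correct processes send only via this operation. A message adversary with parameter $d$, $0\le d<c$, may, for each broadcast by a correct process, suppress up to $d$ of the copies addressed to correct processes; all other copies sent between correct processes are eventually received. Digital signatures are unforgeable: each process has a key pair, all public keys and their owners are known, and only $p_k$ can produce a valid signature by $p_k$; a process produces at most one signature per signed item. MBRB abstraction. An application message (app-message) $m$ is mbrb-broadcast by $p_i$ with a sequence number $sn$ (invocation $\mathrm{mbrb\_broadcast}(m,sn)$);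 a correct process never uses the same sequence number twice. A process mbrb-delivers a triplet $(m,sn,j)$ meaning app-message $m$ from $p_j$ with sequence number $sn$. Properties: MBRB-Validity: if a correct process mbrb-delivers $m$ from a correct $p_j$ with sequence number $sn$, then $p_j$ mbrb-broadcast $m$ with sequence number $sn$. MBRB-No-duplication: a correct process mbrb-delivers at most one app-message from $p_j$ with sequence number $sn$. MBRB-No-duplicity: no two correct processes mbrb-deliver different app-messages from the same $p_i$ with the same $sn$. MBRB-Local-delivery: if a correct $p_i$ mbrb-broadcasts $m$ with $sn$, at least one correct process eventually mbrb-delivers $m$ from $p_i$ with $sn$. MBRB-Global-delivery (with parameter $\ell$): if a correct process mbrb-delivers $m$ from $p_j$ with $sn$, then at least $\ell$ correct processes mbrb-deliver $m$ from $p_j$ with $sn$. Algorithm 1 (code for $p_i$). Each process stores, for each triplet $(m,sn,j)$, a set of saved valid signatures of that triplet, at most one per signer. On $\mathrm{mbrb\_broadcast}(m,sn)$: $p_i$ saves its own signature of $(m,sn,i)$ and broadcasts $\mathrm{BUNDLE}(m,sn,i,S)$ where $S$ is the set of all saved signatures for $(m,sn,i)$. On receiving $\mathrm{BUNDLE}(m,sn,j,sigs)$: if $p_i$ has not already mbrb-delivered some triplet $(-,sn,j)$ and $sigs$ contains a valid signature of $(m,sn,j)$ by $p_j$, then: (1) $p_i$ saves all not-yet-saved valid signatures of $(m,sn,j)$ contained in $sigs$; (2) if $p_i$ has not yet signed any triplet $(-,sn,j)$, it saves its own signature of $(m,sn,j)$ and broadcasts $\mathrm{BUNDLE}(m,sn,j,\text{all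 saved signatures for }(m,sn,j))$; (3) if strictly more than $\frac{n+t}{2}$ signatures for $(m,sn,j)$ are saved, it broadcasts $\mathrm{BUNDLE}(m,sn,j,\text{all saved signatures for }(m,sn,j))$ and then mbrb-delivers $(m,sn,j)$. Time is measured in communication steps: local computation takes zero time and all imp-messages have the same transfer delay (one step). *)

(* Defs.v *)
(* Model of Algorithm 1 (signature-based MBRB) as a
   trace semantics: an execution is an infinite sequence of events. *)
From HB Require Import structures.
From mathcomp Require Import all_boot all_order all_algebra.
Set Implicit Arguments. Unset Strict Implicit. Unset Printing Implicit Defensive.
Import Order.TTheory GRing.Theory Num.Theory.

Section Model.
Variables (M : eqType) (n t : nat).

(* processes are 'I_n; a triplet (m, sn, j) = app-message m from p_j with
   sequence number sn. *)
Definition triplet := (M * nat * 'I_n)%type.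
Definition tr_sn (x : triplet) : nat := x.1.2.
Definition tr_src (x : triplet) : 'I_n := x.2.

(* an (abstract, unforgeable) signature: (signer, signed triplet) *)
Definition signature := ('I_n * triplet)%type.

Inductive imsg := Bundle of M & nat & 'I_n & seq signature.
Definition bundle_tag (b : imsg) : nat * 'I_n :=
  let: Bundle _ sn j _ := b in (sn, j).
Definition bundle_sigs (b : imsg) : seq signature :=
  let: Bundle _ _ _ s := b in s.

Record lstate := LState {
  saved : seq signature;
  mysigs : seq triplet;
  delivered : seq triplet }.
Definition init_lstate := LState [::] [::] [::].

Definition sigs_for (st : lstate) (x : triplet) : seq signature :=
  [seq s <- saved st | s.2 == x].
Definition nsaved (st : lstate) (x : triplet) : nat :=
  #|[set k : 'I_n | (k, x) \in saved st]|.

Definition add_sig (st : lstate) (s : signature) : lstate :=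
  if s \in saved st then st
  else LState (rcons (saved st) s) (mysigs st) (delivered st).
Definition add_mysig (st : lstate) (x : triplet) : lstate :=
  LState (saved st) (rcons (mysigs st) x) (delivered st).
Definition add_delivered (st : lstate) (x : triplet) : lstate :=
  LState (saved st) (mysigs st) (rcons (delivered st) x).

Definition has_key (sn : nat) (j : 'I_n) (l : seq triplet) : bool :=
  has (fun y : triplet => (tr_sn y == sn) && (tr_src y == j)) l.

(* result of a local step: new state, imp-messages broadcast (in order),
   optional mbrb-delivered triplet *)
Definition step_res := (lstate * seq imsg * option triplet)%type.

Definition on_invoke (i : 'I_n) (st : lstate) (m : M) (sn : nat) : step_res :=
  let x : triplet := (m, sn, i) in
  let st1 := add_sig (add_mysig st x) (i, x) in
  (st1, [:: Bundle m sn i (sigs_for st1 x)], None).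

Definition on_bundle (i : 'I_n) (st : lstate) (m : M) (sn : nat) (j : 'I_n)
    (sigs : seq signature) : step_res :=
  let x : triplet := (m, sn, j) in
  if ~~ has_key sn j (delivered st) && ((j, x) \in sigs) then
    let st1 := foldl add_sig st [seq s <- sigs | s.2 == x] in
    let st2 := if has_key sn j (mysigs st1) then st1
               else add_sig (add_mysig st1 x) (i, x) in
    let out2 := if has_key sn j (mysigs st1) then [::]
                else [:: Bundle m sn j (sigs_for st2 x)] in
    if n + t < 2 * nsaved st2 x then
      (add_delivered st2 x, out2 ++ [:: Bundle m sn j (sigs_for st2 x)], Some x)
    else (st2, out2, None)
  else (st, [::], None).

Inductive event :=
| Invoke of 'I_n & M & nat
    (* Invoke i m sn : correct p_i invokes mbrb_broadcast(m, sn) *)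
| Recv of 'I_n & 'I_n & imsg & nat & nat
    (* Recv i src b s k : p_i receives from src the copy addressed to p_i
       of the k-th imp-message sent by src at step s, whose content is b *)
| ByzSend of 'I_n & 'I_n & imsg
    (* ByzSend b dst msg : Byzantine p_b sends msg to p_dst *)
| Skip.

Definition handle (i : 'I_n) (st : lstate) (e : event) : step_res :=
  match e with
  | Invoke i' m sn => if i' == i then on_invoke i st m sn else (st, [::], None)
  | Recv i' _ (Bundle m sn j sigs) _ _ =>
      if i' == i then on_bundle i st m sn j sigs else (st, [::], None)
  | _ => (st, [::], None)
  end.

Variable tr : nat -> event.

(* local state of p_i before step s *)
Fixpoint lst (i : 'I_n) (s : nat) : lstate :=
  if s is s'.+1 then (handle i (lst i s') (tr s')).1.1 else init_lstate.
Definition outs (i : 'I_n) (s : nat) : seq imsg := (handle i (lst i s) (tr s)).1.2.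
Definition dlv (i : 'I_n) (s : nat) : option triplet := (handle i (lst i s) (tr s)).2.

Variables (d : nat) (C : {set 'I_n}).  (* C = set of correct processes *)

(* admissible executions of Algorithm 1 with correct set C, against
   Byzantine processes (~: C) and a message adversary of power d *)
Definition admissible : Prop :=
  (forall s i m sn, tr s = Invoke i m sn -> i \in C) /\
  (forall s1 s2 i m1 m2 sn, tr s1 = Invoke i m1 sn -> tr s2 = Invoke i m2 sn ->
     s1 = s2) /\
  (* network: no creation, no corruption; receptions modelled at correct
     processes only (Byzantine ones behave arbitrarily anyway) *)
  (forall s i src b s' k, tr s = Recv i src b s' k ->
     [/\ i \in C, s' < s &
       (src \in C /\ onth (outs src s') k = Some b) \/
       [/\ src \notin C, k = 0 & tr s' = ByzSend src i b]]) /\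
  (forall s1 s2 i src1 src2 b1 b2 s' k,
     tr s1 = Recv i src1 b1 s' k -> tr s2 = Recv i src2 b2 s' k -> s1 = s2) /\
  (* Byzantine senders; unforgeability of signatures of correct processes *)
  (forall s bz dst b, tr s = ByzSend bz dst b ->
     bz \notin C /\
     forall k x, (k, x) \in bundle_sigs b -> k \in C -> x \in mysigs (lst k s)) /\
  (* message adversary: for each broadcast by a correct process, at most d
     copies are suppressed; every other copy to a correct process is
     eventually received *)
  (forall src s k b, src \in C -> onth (outs src s) k = Some b ->
     exists D : {set 'I_n}, #|D| <= d /\
       forall dst, dst \in C -> dst \notin D ->
         exists s2, tr s2 = Recv dst src b s k).

(* timed execution: each event occurs at time tau s (nondecreasing along the
   trace, local computation takes zero time), and every imp-message has
   transfer delay exactly one communication step *)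
Definition unit_delay (R : numDomainType) (tau : nat -> R) : Prop :=
  (forall s1 s2, (s1 <= s2)%N -> (tau s1 <= tau s2)%R) /\
  (forall s i src b s' k, tr s = Recv i src b s' k -> tau s = (tau s' + 1)%R).

Definition mbrb_validity : Prop :=
  forall p s m sn j, p \in C -> j \in C -> dlv p s = Some (m, sn, j) ->
    exists s0, tr s0 = Invoke j m sn.

Definition mbrb_no_duplication : Prop :=
  forall p s1 s2 m1 m2 sn j, p \in C ->
    dlv p s1 = Some (m1, sn, j) -> dlv p s2 = Some (m2, sn, j) -> s1 = s2.

Definition mbrb_no_duplicity : Prop :=
  forall p q s1 s2 m1 m2 sn j, p \in C -> q \in C ->
    dlv p s1 = Some (m1, sn, j) -> dlv q s2 = Some (m2, sn, j) -> m1 = m2.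

Definition mbrb_local_delivery : Prop :=
  forall i s0 m sn, i \in C -> tr s0 = Invoke i m sn ->
    exists p s, p \in C /\ dlv p s = Some (m, sn, i).

Definition mbrb_global_delivery (l : nat) : Prop :=
  forall p s m sn j, p \in C -> dlv p s = Some (m, sn, j) ->
    exists S : {set 'I_n}, [/\ S \subset C, l <= #|S| &
      forall q, q \in S -> exists s', dlv q s' = Some (m, sn, j)].

Definition delivered_within (R : numDomainType) (tau : nat -> R) (l : nat)
    (i : 'I_n) (m : M) (sn s0 : nat) (delta : R) : Prop :=
  exists S : {set 'I_n}, [/\ S \subset C, l <= #|S| &
    forall q, q \in S -> exists s', dlv q s' = Some (m, sn, i) /\
                              (tau s' <= tau s0 + delta)%R].

(* number of imp-messages (copies, n per broadcast) with tag (sn, i) sent by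
   correct processes during the first N steps *)
Definition msgs_sent (sn : nat) (i : 'I_n) (N : nat) : nat :=
  \sum_(p in C) \sum_(s < N) n * count (fun b => bundle_tag b == (sn, i)) (outs p s).

End Model.

(* Main.v *)
Require Import Defs.
From HB Require Import structures.
From mathcomp Require Import all_boot all_order all_algebra zify lra.
From Stdlib Require Import Classical IndefiniteDescription.
Import Order.TTheory GRing.Theory Num.Theory.
Set Implicit Arguments. Unset Strict Implicit. Unset Printing Implicit Defensive.


Section Basic.
Variables (M : eqType) (n t : nat).
Implicit Types (st : lstate M n) (x : triplet M n) (sg : signature M n).

Lemma saved_add_sig st sg y :
  (y \in saved (add_sig st sg)) = (y == sg) || (y \in saved st).
Proof.
rewrite /add_sig; case: ifP => /= H; last by rewrite mem_rcons in_cons.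
by case: eqP => // ->.
Qed.
Lemma mysigs_add_sig st sg : mysigs (add_sig st sg) = mysigs st.
Proof. by rewrite /add_sig; case: ifP. Qed.
Lemma delivered_add_sig st sg : delivered (add_sig st sg) = delivered st.
Proof. by rewrite /add_sig; case: ifP. Qed.

Lemma saved_foldl st l y :
  (y \in saved (foldl (@add_sig M n) st l)) = (y \in l) || (y \in saved st).
Proof.
elim: l st => [|a l IH] st //=.
rewrite IH saved_add_sig in_cons.
by case: (y == a); case: (y \in l); case: (y \in saved st).
Qed.
Lemma mysigs_foldl st l : mysigs (foldl (@add_sig M n) st l) = mysigs st.
Proof. by elim: l st => [|a l IH] st //=; rewrite IH mysigs_add_sig. Qed.
Lemma delivered_foldl st l : delivered (foldl (@add_sig M n) st l) = delivered st.
Proof. by elim: l st => [|a l IH] st //=; rewrite IH delivered_add_sig. Qed.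

Lemma in_sigs_for st x (y : signature M n) : (y \in sigs_for st x) = (y \in saved st) && (y.2 == x).
Proof. by rewrite /sigs_for mem_filter andbC. Qed.

Lemma in_sigs_forI st x (y : signature M n) : y \in saved st -> y.2 = x -> y \in sigs_for st x.
Proof. by move=> H E; rewrite in_sigs_for H E eqxx. Qed.

Definition acc st (m : M) sn (j : 'I_n) (sigs : seq (signature M n)) :=
  ~~ has_key sn j (delivered st) && ((j, (m, sn, j)) \in sigs).

Lemma ob_nacc i st m sn j sigs : ~~ acc st m sn j sigs ->
  on_bundle t i st m sn j sigs = (st, [::], None).
Proof. by rewrite /on_bundle /acc => /negbTE ->. Qed.


Lemma ob_acc_eq i st m sn j sigs : acc st m sn j sigs ->
  on_bundle t i st m sn j sigs =
   let x := (m,sn,j) in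
   let st1 := foldl (@add_sig M n) st [seq s <- sigs | s.2 == x] in
   let st2 := if has_key sn j (mysigs st) then st1
              else add_sig (add_mysig st1 x) (i,x) in
   let out2 := if has_key sn j (mysigs st) then [::]
               else [:: Bundle m sn j (sigs_for st2 x)] in
   if n + t < 2 * nsaved st2 x then
     (add_delivered st2 x, out2 ++ [:: Bundle m sn j (sigs_for st2 x)], Some x)
   else (st2, out2, None).
Proof. by rewrite /on_bundle /acc => ->; rewrite mysigs_foldl. Qed.

Section OB.
Variables (i : 'I_n) (st : lstate M n) (m : M) (sn : nat) (j : 'I_n)
  (sigs : seq (signature M n)).
Let x : triplet M n := (m, sn, j).
Let res := on_bundle t i st m sn j sigs.

Lemma ob_saved y : y \in saved res.1.1 ->
  [\/ y \in saved st, y \in sigs | y = (i, x) /\ x \in mysigs res.1.1].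
Proof.
rewrite /res; case: (boolP (acc st m sn j sigs)) => H; last first.
  by rewrite ob_nacc //= => ?; constructor 1.
rewrite (ob_acc_eq _ H) /=.
case: ifP => Hm; case: ifP => Ht /=;
  rewrite ?saved_add_sig /= ?saved_foldl ?mem_filter ?mysigs_foldl;
  try (case/orP => [/andP[_ ?]|?]; [constructor 2|constructor 1]; done).
all: case/orP => [/eqP->|]; first (constructor 3; split => //; rewrite /= ?mysigs_add_sig /= ?mysigs_foldl ?mem_rcons ?in_cons ?eqxx //).
all: case/orP => [/andP[_ ?]|?]; [constructor 2|constructor 1]; done.
Qed.

Lemma ob_saved_mono : {subset saved st <= saved res.1.1}.
Proof.
move=> y Hy; rewrite /res; case: (boolP (acc st m sn j sigs)) => H; last first.
  by rewrite ob_nacc.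
rewrite (ob_acc_eq _ H) /=.
by case: ifP => Hm; case: ifP => Ht /=;
  rewrite ?saved_add_sig /= ?saved_foldl Hy ?orbT.
Qed.

Lemma ob_mysigs : mysigs res.1.1 = mysigs st \/
  [/\ mysigs res.1.1 = rcons (mysigs st) x, acc st m sn j sigs &
      ~~ has_key sn j (mysigs st)].
Proof.
rewrite /res; case: (boolP (acc st m sn j sigs)) => H; last first.
  by rewrite ob_nacc //=; left.
rewrite (ob_acc_eq _ H) /=.
case: ifP => Hm; case: ifP => Ht /=; rewrite ?mysigs_add_sig /= ?mysigs_foldl;
  try by left.
all: by right; split => //; rewrite Hm.
Qed.

Lemma ob_delivered : delivered res.1.1 = delivered st \/
  (delivered res.1.1 = rcons (delivered st) x /\ res.2 = Some x).
Proof.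
rewrite /res; case: (boolP (acc st m sn j sigs)) => H; last first.
  by rewrite ob_nacc //=; left.
rewrite (ob_acc_eq _ H) /=.
case: ifP => Hm; case: ifP => Ht /=; rewrite ?delivered_add_sig /= ?delivered_foldl;
  by [left | right].
Qed.

Lemma ob_dlv_del y : res.2 = Some y -> delivered res.1.1 = rcons (delivered st) y.
Proof.
rewrite /res; case: (boolP (acc st m sn j sigs)) => H; last by rewrite ob_nacc.
rewrite (ob_acc_eq _ H) /=.
by case: ifP => Hm; case: ifP => Ht //= [<-]; rewrite ?delivered_add_sig /= ?delivered_foldl.
Qed.

Lemma ob_dlv y : res.2 = Some y ->
  [/\ y = x, acc st m sn j sigs, (n + t < 2 * nsaved res.1.1 x)%N,
     (j, x) \in saved res.1.1 &
     exists kk, onth res.1.2 kk = Some (Bundle m sn j (sigs_for res.1.1 x))].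
Proof.
rewrite /res; case: (boolP (acc st m sn j sigs)) => H; last first.
  by rewrite ob_nacc.
have Hjx : (j, x) \in [seq s <- sigs | s.2 == x].
  by rewrite mem_filter eqxx; case/andP: H.
rewrite (ob_acc_eq _ H) /=.
case: ifP => Hm; case: ifP => Ht //= [<-]; split => //;
  rewrite ?saved_add_sig /= ?saved_foldl ?Hjx ?orbT //.
all: try (by move: Hm; rewrite Ht).
all: try (by exists 0).
all: by exists 1.
Qed.

Lemma ob_outs kk (b : imsg M n) : onth res.1.2 kk = Some b ->
  bundle_tag b = (sn, j) /\ {subset bundle_sigs b <= saved res.1.1}.
Proof.
rewrite /res; case: (boolP (acc st m sn j sigs)) => H; last first.
  by rewrite ob_nacc //; case: kk.
rewrite (ob_acc_eq _ H) /=.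
case: ifP => Hm; case: ifP => Ht //=; case: kk => [|[|kk]] //=;
  rewrite ?onth0n // => -[<-];
  split => // z; rewrite mem_filter; by case/andP.
Qed.

Lemma ob_acc : acc st m sn j sigs ->
  [/\ {subset [seq s <- sigs | s.2 == x] <= saved res.1.1},
     has_key sn j (mysigs res.1.1),
     (n + t < 2 * #|[set k | ((k, x) \in saved st) || ((k, x) \in sigs)]| ->
        res.2 = Some x) &
     (~~ has_key sn j (mysigs st) -> exists sgs : seq (signature M n),
        [/\ onth res.1.2 0 = Some (Bundle m sn j sgs), (i, x) \in sgs &
            (j, x) \in sgs])].
Proof.
move=> H; rewrite /res (ob_acc_eq _ H) /=.
have Hjx : (j, x) \in [seq s <- sigs | s.2 == x].
  by rewrite mem_filter eqxx; case/andP: H.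
set st1 := foldl _ _ _.
set st2 := (if has_key sn j (mysigs st) then st1 else _).
have S1 : {subset [seq s <- sigs | s.2 == x] <= saved st2}.
  move=> z Hz; rewrite /st2; case: ifP => _;
  by rewrite ?saved_add_sig /= saved_foldl Hz ?orbT.
have S0 : {subset saved st <= saved st2}.
  move=> z Hz; rewrite /st2; case: ifP => _;
  by rewrite ?saved_add_sig /= saved_foldl Hz ?orbT.
have K2 : has_key sn j (mysigs st2).
  rewrite /st2; case: ifP => Hm; rewrite ?mysigs_add_sig /= mysigs_foldl //.
  by rewrite /has_key has_rcons /tr_sn /tr_src /= !eqxx.
have NS : (#|[set k | ((k, x) \in saved st) || ((k, x) \in sigs)]| <= nsaved st2 x)%N.
  apply: subset_leq_card; apply/subsetP => k; rewrite !inE.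
  case/orP => Hk; first exact: S0.
  by apply: S1; rewrite mem_filter /= eqxx.
split.
- by move=> z Hz; case: ifP => _ /=; apply: S1.
- by case: ifP.
- move=> Hc; case: ifP => // /negP; case.
  exact: leq_trans Hc (leq_mul (leqnn 2) NS).
- move=> Hm.
  have E : st2 = add_sig (add_mysig st1 x) (i,x) by rewrite /st2 (negbTE Hm).
  exists (sigs_for st2 x); rewrite (negbTE Hm).
  split; first by case: ifP.
  all: rewrite /sigs_for mem_filter eqxx /=.
    by rewrite E saved_add_sig eqxx.
  exact: S1.
Qed.

Definition G sn0 (i0 : 'I_n) (st' : lstate M n) : nat :=
  has_key sn0 i0 (mysigs st') + has_key sn0 i0 (delivered st').

Lemma has_key_rcons sn0 (i0 : 'I_n) (l : seq (triplet M n)) y :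
  has_key sn0 i0 (rcons l y) = has_key sn0 i0 l || (tr_sn y == sn0) && (tr_src y == i0).
Proof. by rewrite /has_key has_rcons orbC. Qed.

Lemma ob_count sn0 i0 :
  count (fun b => bundle_tag b == (sn0, i0)) res.1.2 + G sn0 i0 st <= G sn0 i0 res.1.1.
Proof.
rewrite /res; case: (boolP (acc st m sn j sigs)) => H; last by rewrite ob_nacc.
have Hd : ~~ has_key sn j (delivered st) by case/andP: H.
rewrite (ob_acc_eq _ H) /G /=.
case: (boolP ((sn == sn0) && (j == i0))) => [/andP[/eqP E1 /eqP E2]|Hne].
  subst sn0 i0; rewrite (negbTE Hd).
  case: ifP => Hm; case: ifP => Hk /=;
  rewrite ?mysigs_add_sig ?delivered_add_sig /= ?mysigs_foldl ?delivered_foldl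
    ?has_key_rcons ?(negbTE Hd) /tr_sn /tr_src /= ?eqxx ?Hk ?andbT ?orbT //=.
have Ht : forall sgs, (bundle_tag (Bundle m sn j sgs) == (sn0, i0)) = false.
  by move=> sgs; rewrite /= xpair_eqE; apply: negbTE.
case: ifP => Hm; case: ifP => Ht' /=;
  rewrite ?mysigs_add_sig ?delivered_add_sig /= ?mysigs_foldl ?delivered_foldl
    ?has_key_rcons ?Ht /tr_sn /tr_src /= ?(negbTE Hne) ?orbF //.
Qed.

End OB.
End Basic.


Section Step.
Variables (M : eqType) (n t : nat) (tr : nat -> event M n).
Local Notation lst := (lst t tr).
Local Notation outs := (outs t tr).
Local Notation dlv := (dlv t tr).

Lemma lstS p s : lst p s.+1 = (handle t p (lst p s) (tr s)).1.1.
Proof. by []. Qed.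

Lemma step_saved p s y : y \in saved (lst p s.+1) ->
  [\/ y \in saved (lst p s),
      (exists src m sn j sigs s' kk,
          tr s = Recv p src (Bundle m sn j sigs) s' kk /\ y \in sigs) |
      (y.1 = p /\ y.2 \in mysigs (lst p s.+1))].
Proof.
rewrite lstS /handle; case E: (tr s) => [i' m sn|i' src [m sn j sigs] s' kk|b dst msg|];
  try (by constructor 1); case: eqP => [<-|_] /=; try (by constructor 1).
- rewrite saved_add_sig /= => /orP[/eqP->|?]; last by constructor 1.
  by constructor 3; split => //; rewrite mysigs_add_sig /= mem_rcons in_cons eqxx.
- case/ob_saved => [?|?|[-> ?]]; [constructor 1|constructor 2|constructor 3] => //.
  by exists src, m, sn, j, sigs, s', kk.
Qed.

Lemma step_mysigs p s : mysigs (lst p s.+1) = mysigs (lst p s) \/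
  exists m sn j, mysigs (lst p s.+1) = rcons (mysigs (lst p s)) (m, sn, j) /\
   ((tr s = Invoke p m sn /\ j = p) \/
    exists src sigs s' kk, [/\ tr s = Recv p src (Bundle m sn j sigs) s' kk,
       acc (lst p s) m sn j sigs & ~~ has_key sn j (mysigs (lst p s))]).
Proof.
rewrite lstS /handle; case E: (tr s) => [i' m sn|i' src [m sn j sigs] s' kk|b dst msg|];
  try (by left); case: eqP => [<-|_] /=; try (by left).
- right; exists m, sn, i'; rewrite mysigs_add_sig; split; first by [].
  by left.
- case: (ob_mysigs t i' (lst i' s) m sn j sigs) => [->|[-> Ha Hk]]; first by left.
  right; exists m, sn, j; split => //; right; by exists src, sigs, s', kk.
Qed.

Lemma step_delivered p s : delivered (lst p s.+1) = delivered (lst p s) \/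
  exists y, delivered (lst p s.+1) = rcons (delivered (lst p s)) y /\ dlv p s = Some y.
Proof.
rewrite /dlv lstS /handle; case E: (tr s) => [i' m sn|i' src [m sn j sigs] s' kk|b dst msg|];
  try (by left); case: eqP => [<-|_] /=; try (by left).
- by rewrite delivered_add_sig; left.
- case: (ob_delivered t i' (lst i' s) m sn j sigs) => [->|[-> Hd]]; first by left.
  by right; exists (m, sn, j).
Qed.

Lemma step_dlv p s y : dlv p s = Some y ->
  exists src m sn j sigs s' kk, tr s = Recv p src (Bundle m sn j sigs) s' kk /\
  [/\ y = (m, sn, j), acc (lst p s) m sn j sigs,
     (n + t < 2 * nsaved (lst p s.+1) y)%N,
     (j, y) \in saved (lst p s.+1) &
     exists kk, onth (outs p s) kk = Some (Bundle m sn j (sigs_for (lst p s.+1) y))].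
Proof.
rewrite /dlv /outs lstS /handle; case E: (tr s) => [i' m sn|i' src [m sn j sigs] s' kk|b dst msg|] //;
  case: eqP => [<-|_] //=.
move=> H; exists src, m, sn, j, sigs, s', kk; split => //.
by case: (ob_dlv H) => -> *.
Qed.

Lemma step_outs p s kk b : onth (outs p s) kk = Some b ->
  {subset bundle_sigs b <= saved (lst p s.+1)}.
Proof.
rewrite /outs lstS /handle; case E: (tr s) => [i' m sn|i' src [m sn j sigs] s' kk'|b' dst msg|];
  try (by case: kk); case: eqP => [<-|_] /=; try (by case: kk).
- case: kk => [|kk] /=; rewrite ?onth0n // => -[<-] z /=; rewrite /sigs_for mem_filter; by case/andP.
- by case/ob_outs.
Qed.

Lemma step_acc p s src m sn j sigs s' kk :
  tr s = Recv p src (Bundle m sn j sigs) s' kk -> acc (lst p s) m sn j sigs ->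
  [/\ {subset [seq z <- sigs | z.2 == (m, sn, j)] <= saved (lst p s.+1)},
     has_key sn j (mysigs (lst p s.+1)),
     (n + t < 2 * #|[set k | ((k, (m, sn, j)) \in saved (lst p s)) ||
                             ((k, (m, sn, j)) \in sigs)]| ->
        dlv p s = Some (m, sn, j)) &
     (~~ has_key sn j (mysigs (lst p s)) -> exists sgs : seq (signature M n),
        [/\ onth (outs p s) 0 = Some (Bundle m sn j sgs), (p, (m, sn, j)) \in sgs &
            (j, (m, sn, j)) \in sgs])].
Proof.
move=> E; rewrite /dlv /outs lstS /handle E eqxx /=.
exact: ob_acc.
Qed.

Lemma step_invoke p s m sn : tr s = Invoke p m sn ->
  [/\ outs p s = [:: Bundle m sn p (sigs_for (lst p s.+1) (m, sn, p))],
      (p, (m, sn, p)) \in saved (lst p s.+1),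
      (m, sn, p) \in mysigs (lst p s.+1) & dlv p s = None].
Proof.
move=> E; rewrite /dlv /outs lstS /handle E eqxx /=.
split => //; rewrite ?saved_add_sig ?eqxx //.
by rewrite mysigs_add_sig /= mem_rcons in_cons eqxx.
Qed.

Lemma step_saved_mono p s : {subset saved (lst p s) <= saved (lst p s.+1)}.
Proof.
move=> y Hy; rewrite lstS /handle; case E: (tr s) => [i' m sn|i' src [m sn j sigs] s' kk|b dst msg|] //;
  case: eqP => [Hp|_] //=; subst i'.
- by rewrite saved_add_sig Hy orbT.
- exact: ob_saved_mono.
Qed.

Lemma saved_mono p s s' : s <= s' -> {subset saved (lst p s) <= saved (lst p s')}.
Proof.
move=> /subnK <-; elim: (s' - s) => [|k IH] //= y Hy.
by rewrite ?addSn; apply: step_saved_mono; apply: IH.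
Qed.

Lemma mysigs_mono p s s' : s <= s' -> {subset mysigs (lst p s) <= mysigs (lst p s')}.
Proof.
move=> /subnK <-; elim: (s' - s) => [|k IH] //= y Hy.
rewrite ?addSn; case: (step_mysigs p (k + s)) => [->|[m [sn [j [-> _]]]]]; first exact: IH.
by rewrite mem_rcons in_cons IH ?orbT.
Qed.

Lemma delivered_mono p s s' : s <= s' -> {subset delivered (lst p s) <= delivered (lst p s')}.
Proof.
move=> /subnK <-; elim: (s' - s) => [|k IH] //= y Hy.
rewrite ?addSn; case: (step_delivered p (k + s)) => [->|[z [-> _]]]; first exact: IH.
by rewrite mem_rcons in_cons IH ?orbT.
Qed.

Lemma has_key_mono sn j (l1 l2 : seq (triplet M n)) :
  {subset l1 <= l2} -> has_key sn j l1 -> has_key sn j l2.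
Proof. by move=> S /hasP[y /S Hy Hk]; apply/hasP; exists y. Qed.

Lemma has_keyP sn j (l : seq (triplet M n)) :
  has_key sn j l -> exists m, (m, sn, j) \in l.
Proof.
case/hasP => [[[m sn'] j'] Hy /andP[/eqP /= E1 /eqP /= E2]].
by exists m; rewrite -E1 -E2.
Qed.

Lemma has_keyI m sn j (l : seq (triplet M n)) : (m, sn, j) \in l -> has_key sn j l.
Proof. by move=> H; apply/hasP; exists (m, sn, j) => //=; rewrite /tr_sn /tr_src !eqxx. Qed.

Lemma dlv_in p s y : dlv p s = Some y -> y \in delivered (lst p s.+1).
Proof.
rewrite /dlv lstS /handle; case E: (tr s) => [i' m sn|i' src [m sn j sigs] s' kk|b dst msg|] //;
  case: eqP => [Hp|_] //=; subst i'.
by move/ob_dlv_del => ->; rewrite mem_rcons in_cons eqxx.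
Qed.

End Step.
Arguments step_saved {M n t tr p s y}.
Arguments step_dlv {M n t tr p s y}.
Arguments step_outs {M n t tr p s kk b}.
Arguments step_acc {M n t tr p s src m sn j sigs s' kk}.
Arguments step_invoke {M n t tr p s m sn}.
Arguments saved_mono {M n t tr p s s'}.
Arguments mysigs_mono {M n t tr p s s'}.
Arguments delivered_mono {M n t tr p s s'}.
Arguments dlv_in {M n t tr p s y}.
Arguments step_saved_mono {M n t tr p s}.


Lemma fchoice (A : Type) (B : Type) (Pr : A -> B -> Prop) :
  (forall a, exists b, Pr a b) -> exists f : A -> B, forall a, Pr a (f a).
Proof.
move=> H; exists (fun a => proj1_sig (constructive_indefinite_description _ (H a))).
move=> a; exact: proj2_sig.
Qed.

Lemma argmax_set n (K : {set 'I_n}) (f : 'I_n -> nat) k0 : k0 \in K ->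
  exists2 k, k \in K & forall k', k' \in K -> f k' <= f k.
Proof.
move=> H; case: (@arg_maxnP _ k0 (mem K) f H) => ks Hks Hmax.
by exists ks => // k' /Hmax.
Qed.

Lemma card_filter_sum n (Q : {set 'I_n}) (P : 'I_n -> bool) :
  #|[set p in Q | P p]| = \sum_(p in Q) (P p : nat).
Proof.
rewrite -sum1_card big_mkcond /= [RHS]big_mkcond /=.
apply: eq_bigr => p _; rewrite inE; by case: (p \in Q); case: (P p).
Qed.

Lemma count_pig n (Q W : {set 'I_n}) (f : 'I_n -> {set 'I_n}) a q :
  (forall p, p \in Q -> f p \subset W /\ a <= #|f p|) ->
  #|W| * q < #|Q| * a ->
  exists2 r, r \in W & q < #|[set p in Q | r \in f p]|.
Proof.
move=> Hf Hlt.
case: (pickP [pred r | (r \in W) && (q < #|[set p in Q | r \in f p]|)]) => [r /andP[? ?]|N].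
  by exists r.
exfalso.
have L1 : \sum_(r in W) #|[set p in Q | r \in f p]| <= #|W| * q.
  rewrite -sum_nat_const; apply: leq_sum => r Hr.
  by move: (N r); rewrite /= Hr /= => /negbT; rewrite -leqNgt.
have L2 : #|Q| * a <= \sum_(r in W) #|[set p in Q | r \in f p]|.
  under eq_bigr => r _ do rewrite card_filter_sum.
  rewrite exchange_big /= -sum_nat_const; apply: leq_sum => p Hp.
  case: (Hf p Hp) => Hs Ha; apply: (leq_trans Ha).
  rewrite -sum1_card big_mkcond /= [X in _ <= X]big_mkcond /=.
  idtac.
  apply: leq_sum => r _; case Hr: (r \in f p) => //.
  by rewrite (subsetP Hs r Hr).
lia.
Qed.

Lemma half_facts a : 2 * (a %/ 2) <= a /\ a < 2 * (a %/ 2) + 2.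
Proof.
have E := divn_eq a 2; have L := ltn_pmod a (isT : 0 < 2).
split; lia.
Qed.

Section Main.
Variables (M : eqType) (n t d : nat) (C : {set 'I_n}) (tr : nat -> event M n).
Local Notation lst := (lst t tr).
Local Notation outs := (outs t tr).
Local Notation dlv := (dlv t tr).
Local Notation step_mysigs := (step_mysigs t tr).
Local Notation step_delivered := (step_delivered t tr).

Hypothesis Hinv : forall s i m sn, tr s = Invoke i m sn -> i \in C.
Hypothesis Huniq : forall s1 s2 i m1 m2 sn, tr s1 = Invoke i m1 sn ->
  tr s2 = Invoke i m2 sn -> s1 = s2.
Hypothesis Hnet : forall s i src b s' k, tr s = Recv i src b s' k ->
     [/\ i \in C, s' < s &
       (src \in C /\ onth (outs src s') k = Some b) \/
       [/\ src \notin C, k = 0 & tr s' = ByzSend src i b]].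
Hypothesis Hbyz : forall s bz dst b, tr s = ByzSend bz dst b ->
     bz \notin C /\
     forall k x, (k, x) \in bundle_sigs b -> k \in C -> x \in mysigs (lst k s).

Hypothesis Hma : forall src s k b, src \in C -> onth (outs src s) k = Some b ->
     exists D : {set 'I_n}, #|D| <= d /\
       forall dst, dst \in C -> dst \notin D ->
         exists s2, tr s2 = Recv dst src b s k.
Hypothesis Hct : n - t <= #|C|.

Lemma U_all s : forall s0, s0 <= s -> forall p k y, p \in C -> k \in C ->
  (k, y) \in saved (lst p s0) -> y \in mysigs (lst k s0).
Proof.
elim: s => [|s IH] s0.
  by rewrite leqn0 => /eqP -> p k y.
rewrite leq_eqVlt => /orP[/eqP ->|]; last by apply: IH.
move=> p k y Hp Hk /step_saved [H|H|[/= Ek Hy]].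
- by apply: (mysigs_mono (leqnSn s)); apply: IH H.
- case: H => src [m [sn [j [sigs [s' [kk [E Hy]]]]]]].
  case: (Hnet E) => _ Hs' [[Hsrc Ho]|[Hsrc _ Eb]].
  + have Hs1 : (k, y) \in saved (lst src s'.+1) by apply: (step_outs Ho).
    apply: (mysigs_mono (leq_trans Hs' (leqnSn s))).
    exact: (IH s'.+1 Hs' src k y Hsrc Hk Hs1).
  + case: (Hbyz Eb) => _ /(_ k y Hy Hk) Hm.
    exact: (mysigs_mono (leq_trans (ltnW Hs') (leqnSn s)) _ Hm).
- by rewrite Ek.
Qed.

Lemma U s p k y : p \in C -> k \in C ->
  (k, y) \in saved (lst p s) -> y \in mysigs (lst k s).
Proof. exact: (U_all (leqnn s)). Qed.

Lemma RV s p src b s' kk k y : tr s = Recv p src b s' kk -> k \in C ->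
  (k, y) \in bundle_sigs b -> y \in mysigs (lst k s).
Proof.
move=> E Hk Hy; case: (Hnet E) => _ Hs' [[Hsrc Ho]|[Hsrc _ Eb]].
- apply: (mysigs_mono Hs'); apply: (U Hsrc Hk); exact: (step_outs Ho).
- case: (Hbyz Eb) => _ /(_ k y Hy Hk) Hm.
  by apply: (mysigs_mono (ltnW Hs')).
Qed.

Lemma Down s k m sn : k \in C -> (m, sn, k) \in mysigs (lst k s) ->
  exists2 s0, s0 < s & tr s0 = Invoke k m sn.
Proof.
move=> Hk; elim: s => [|s IH] //=.
case: (step_mysigs k s) => [->|[m' [sn' [j [-> Hc]]]]].
  by move/IH => [s0 ? ?]; exists s0 => //; apply: ltnW.
rewrite mem_rcons in_cons => /orP[/eqP [E1 E2 E3]|]; last first.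
  by move/IH => [s0 ? ?]; exists s0 => //; apply: ltnW.
subst m' sn' j; case: Hc => [[E _]|[src [sigs [s' [kk [E Ha Hn]]]]]].
  by exists s.
case/andP: Ha => _ Hs.
have := RV E Hk Hs => Hm.
by rewrite (has_keyI Hm) in Hn.
Qed.

Lemma Dgen s k j m sn : k \in C -> j \in C -> (m, sn, j) \in mysigs (lst k s) ->
  exists s0, tr s0 = Invoke j m sn.
Proof.
move=> Hk Hj; elim: s => [|s IH] //=.
case: (step_mysigs k s) => [->|[m' [sn' [j' [-> Hc]]]]]; first exact: IH.
rewrite mem_rcons in_cons => /orP[/eqP [E1 E2 E3]|]; last exact: IH.
subst m' sn' j'; case: Hc => [[E ->]|[src [sigs [s' [kk [E Ha Hn]]]]]].
  by exists s.
case/andP: Ha => _ Hs.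
have := RV E Hj Hs => Hm.
by case: (Down Hj Hm) => s0 _ ?; exists s0.
Qed.

Lemma Euniq s k m1 m2 sn j : k \in C -> (m1, sn, j) \in mysigs (lst k s) ->
  (m2, sn, j) \in mysigs (lst k s) -> m1 = m2.
Proof.
move=> Hk; elim: s => [|s IH] //=.
case: (step_mysigs k s) => [->|[m' [sn' [j' [-> Hc]]]]]; first exact: IH.
rewrite !mem_rcons !in_cons.
have Hold : forall m0 m3, (m0, sn, j) = (m', sn', j') -> (m3, sn, j) \in mysigs (lst k s) -> False.
  move=> m0 m3 [E1 E2 E3] Hm3; subst m0 sn' j'.
  case: Hc => [[E Ej]|[src [sigs [s' [kk [E Ha Hn]]]]]].
    subst j; case: (Down Hk Hm3) => s0 Hs0 E0.
    by move: (Huniq E0 E); move=> Es; rewrite Es ltnn in Hs0.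
  by rewrite (has_keyI Hm3) in Hn.
case/orP => [/eqP E1|H1]; case/orP => [/eqP E2|H2].
- by move: E1 E2 => [-> _ _] [-> _ _].
- by case: (Hold _ _ E1 H2).
- by case: (Hold _ _ E2 H1).
- exact: IH.
Qed.

Lemma DH p s y : y \in delivered (lst p s) -> exists2 s', s' < s & dlv p s' = Some y.
Proof.
elim: s => [|s IH] //=.
case: (step_delivered p s) => [->|[z [-> Hz]]].
  by move/IH => [s' ? ?]; exists s' => //; apply: ltnW.
rewrite mem_rcons in_cons => /orP[/eqP ->|]; first by exists s.
by move/IH => [s' ? ?]; exists s' => //; apply: ltnW.
Qed.

Lemma validity p s m sn j : j \in C -> dlv p s = Some (m, sn, j) ->
  exists2 s0, s0 < s & tr s0 = Invoke j m sn.
Proof.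
move=> Hj /step_dlv [src [m' [sn' [j' [sigs [s' [kk [E [Ey Ha _ _ _]]]]]]]]].
case: Ey => E1 E2 E3; subst; case/andP: Ha => _ Hs.
exact: (Down Hj (RV E Hj Hs)).
Qed.

Lemma no_dup p s1 s2 m1 m2 sn j : dlv p s1 = Some (m1, sn, j) ->
  dlv p s2 = Some (m2, sn, j) -> s1 = s2.
Proof.
wlog: s1 s2 m1 m2 / s1 <= s2.
  move=> W H1 H2; case: (leqP s1 s2) => H; first exact: W H1 H2.
  by symmetry; apply: W H2 H1; apply: ltnW.
rewrite leq_eqVlt => /orP[/eqP //|Hlt] H1 H2.
have Hd := delivered_mono Hlt _ (dlv_in H1).
case: (step_dlv H2) => src [m' [sn' [j' [sigs [s' [kk [E [Ey Ha _ _ _]]]]]]]].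
case: Ey => E1 E2 E3; subst; case/andP: Ha => /negP[].
exact: has_keyI Hd.
Qed.

Lemma common_signer (S1 S2 : {set 'I_n}) : n - t <= #|C| ->
  n + t < 2 * #|S1| -> n + t < 2 * #|S2| -> exists k, [/\ k \in C, k \in S1 & k \in S2].
Proof.
move=> Hc H1 H2.
case: (pickP [pred k | [&& k \in C, k \in S1 & k \in S2]]) => [k /and3P[? ? ?]|N].
  by exists k.
exfalso.
have Sub : S1 :&: S2 \subset ~: C.
  apply/subsetP => k; rewrite !inE => /andP[h1 h2]; apply/negP => hc.
  by move: (N k); rewrite /= hc h1 h2.
have := subset_leq_card Sub.
have := cardsUI S1 S2.
have := max_card (S1 :|: S2); rewrite card_ord.
have := cardsC C; rewrite card_ord.
lia.
Qed.

Lemma no_duplicity p q s1 s2 m1 m2 sn j : n - t <= #|C| -> p \in C -> q \in C ->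
  dlv p s1 = Some (m1, sn, j) -> dlv q s2 = Some (m2, sn, j) -> m1 = m2.
Proof.
move=> Hc Hp Hq H1 H2.
case: (step_dlv H1) => _ [_ [_ [_ [_ [_ [_ [_ [_ _ T1 _ _]]]]]]]].
case: (step_dlv H2) => _ [_ [_ [_ [_ [_ [_ [_ [_ _ T2 _ _]]]]]]]].
case: (common_signer Hc T1 T2) => k [Hk]; rewrite !inE => K1 K2.
have M1 := U Hp Hk K1; have M2 := U Hq Hk K2.
have L1 : s1.+1 <= maxn s1.+1 s2.+1 by apply: leq_maxl.
have L2 : s2.+1 <= maxn s1.+1 s2.+1 by apply: leq_maxr.
exact: (Euniq Hk (mysigs_mono L1 _ M1) (mysigs_mono L2 _ M2)).
Qed.

Lemma keyx i m sn s0 r s : i \in C -> tr s0 = Invoke i m sn ->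
  has_key sn i (delivered (lst r s)) -> exists2 s', s' < s & dlv r s' = Some (m, sn, i).
Proof.
move=> Hi E0 /has_keyP [m' /DH [s' Hs' Hd]]; exists s' => //.
case: (validity Hi Hd) => s1 _ E1.
by have := Huniq E1 E0 => Es; subst; rewrite E0 in E1; case: E1 => ->.
Qed.

Lemma SBL k s m sn j : k \in C -> (m, sn, j) \in mysigs (lst k s) ->
  exists s' kk (sgs : seq (signature M n)), [/\ s' < s,
    onth (outs k s') kk = Some (Bundle m sn j sgs),
    (k, (m, sn, j)) \in sgs & (j, (m, sn, j)) \in sgs].
Proof.
move=> Hk; elim: s => [|s IH] //=.
case: (step_mysigs k s) => [->|[m' [sn' [j' [-> Hc]]]]].
  by move/IH => [s' [kk [sgs [? ? ? ?]]]]; exists s', kk, sgs; split => //; apply: ltnW.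
rewrite mem_rcons in_cons => /orP[/eqP [E1 E2 E3]|]; last first.
  by move/IH => [s' [kk [sgs [? ? ? ?]]]]; exists s', kk, sgs; split => //; apply: ltnW.
subst m' sn' j'; case: Hc => [[E Ej]|[src [sigs [s' [kk [E Ha Hn]]]]]].
  subst j; case: (step_invoke (t:=t) E) => Eo Hs _ _.
  exists s, 0, (sigs_for (lst k s.+1) (m, sn, k)); split => //; first by rewrite Eo.
  1-2: by apply: in_sigs_forI.
case: (step_acc E Ha) => _ _ _ /(_ Hn) [sgs [? ? ?]].
by exists s, 0, sgs.
Qed.

Lemma signed_acc r s src m sn j sigs s' kk : j \in C ->
  tr s = Recv r src (Bundle m sn j sigs) s' kk -> acc (lst r s) m sn j sigs ->
  (m, sn, j) \in mysigs (lst r s.+1).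
Proof.
move=> Hj E Ha; case: (Hnet E) => Hr _ _.
case: (step_acc E Ha) => _ /has_keyP [m' Hm'] _ _.
case/andP: Ha => _ Hs.
case: (Down Hj (RV E Hj Hs)) => s1 _ E1.
case: (Dgen Hr Hj Hm') => s2 E2.
by have := Huniq E1 E2 => Es; subst; rewrite E1 in E2; case: E2 => ->.
Qed.

Lemma signed r s src m sn j sigs s' kk : j \in C ->
  tr s = Recv r src (Bundle m sn j sigs) s' kk -> (j, (m, sn, j)) \in sigs ->
  (m, sn, j) \in mysigs (lst r s.+1).
Proof.
move=> Hj E Hs; case: (Hnet E) => Hr _ _.
case: (boolP (acc (lst r s) m sn j sigs)) => Ha; first exact: signed_acc E Ha.
have Hk : has_key sn j (delivered (lst r s)) by move: Ha; rewrite /acc Hs andbT negbK.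
case: (Down Hj (RV E Hj Hs)) => s1 _ E1.
case: (keyx Hj E1 Hk) => s'' Hs'' Hd.
case: (step_dlv Hd) => src' [m2 [sn2 [j2 [sigs2 [s2 [kk2 [E2 [Ey Ha2 _ _ _]]]]]]]].
case: Ey => E3 E4 E5; subst.
apply: (mysigs_mono (leq_trans Hs'' (leqnSn s))); exact: signed_acc E2 Ha2.
Qed.

Definition Rcv (P : nat -> Prop) r m sn i k s2 :=
  exists src (sigs : seq (signature M n)) s' kk,
    [/\ P s2, tr s2 = Recv r src (Bundle m sn i sigs) s' kk,
        (k, (m, sn, i)) \in sigs & (i, (m, sn, i)) \in sigs].

Lemma deliver_K r (P : nat -> Prop) i m sn s0 (K : {set 'I_n}) :
  (forall a b, a <= b -> P b -> P a) ->
  i \in C -> tr s0 = Invoke i m sn ->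
  n + t < 2 * #|K| ->
  (forall k, k \in K -> exists s2, Rcv P r m sn i k s2) ->
  exists s, P s /\ dlv r s = Some (m, sn, i).
Proof.
move=> Pdown Hi E0 HK HR.
have : forall k, exists s2, k \in K -> Rcv P r m sn i k s2.
  move=> k; case: (boolP (k \in K)) => Hk; last by exists 0.
  by case: (HR k Hk) => s2 ?; exists s2.
case/fchoice => f Hf.
have : 0 < #|K| by rewrite lt0n; apply/eqP => E; rewrite E in HK.
case/card_gt0P => k0 Hk0.
case: (argmax_set f Hk0) => ks Hks Hmax.
case: (Hf ks Hks) => src [sigs [s' [kk [PS ES Hks' His]]]].
case: (boolP (has_key sn i (delivered (lst r (f ks))))) => Hd.
  case: (keyx Hi E0 Hd) => s3 Hs3 D3; exists s3; split => //.
  exact: Pdown (ltnW Hs3) PS.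
have Ha : acc (lst r (f ks)) m sn i sigs by rewrite /acc Hd His.
case: (step_acc ES Ha) => _ _ Hth _; exists (f ks); split => //; apply: Hth.
apply: (leq_trans HK); rewrite leq_mul2l /=; apply: subset_leq_card.
apply/subsetP => k Hk; rewrite inE.
case: (Hf k Hk) => src' [sigs' [s'' [kk' [_ Ek Hk' Hi']]]].
have := Hmax k Hk; rewrite leq_eqVlt => /orP[/eqP Eq|Hlt].
  rewrite Eq ES in Ek; case: Ek => *; subst.
  by rewrite Hk' orbT.
have Hd' : ~~ has_key sn i (delivered (lst r (f k))).
  apply: contra Hd; apply: has_key_mono; exact: delivered_mono (ltnW Hlt).
have Ha' : acc (lst r (f k)) m sn i sigs' by rewrite /acc Hd' Hi'.
case: (step_acc Ek Ha') => Hsub _ _ _.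
apply/orP; left; apply: (saved_mono Hlt); apply: Hsub.
by rewrite mem_filter eqxx.
Qed.

Lemma GD p s m sn j : p \in C -> dlv p s = Some (m, sn, j) ->
  exists D : {set 'I_n}, #|D| <= d /\ forall r, r \in C -> r \notin D ->
    exists s2 b kk s3, [/\ tr s2 = Recv r p b s kk, s3 <= s2 & dlv r s3 = Some (m, sn, j)].
Proof.
move=> Hp Hd.
case: (step_dlv Hd) => src0 [m' [sn' [j' [sigs [s' [kk [E [Ey Ha Th Hjs [kk0 Ho]]]]]]]]].
case: Ey => E1 E2 E3; subst m' sn' j'.
case: (Hma Hp Ho) => D [HD HR]; exists D; split => // r Hr HrD.
case: (HR r Hr HrD) => s2 E2.
exists s2, (Bundle m sn j (sigs_for (lst p s.+1) (m, sn, j))), kk0.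
case: (boolP (has_key sn j (delivered (lst r s2)))) => Hk.
  case/has_keyP: Hk => m'' /DH [s3 Hs3 D3]; exists s3; split => //; first exact: ltnW.
  by rewrite (no_duplicity Hct Hp Hr Hd D3).
have Ha2 : acc (lst r s2) m sn j (sigs_for (lst p s.+1) (m, sn, j)).
  by rewrite /acc Hk /=; apply: in_sigs_forI.
case: (step_acc E2 Ha2) => _ _ Hth _; exists s2; split => //; apply: Hth.
apply: (leq_trans Th); rewrite leq_mul2l /=; apply: subset_leq_card.
apply/subsetP => k; rewrite !inE => Hk'; apply/orP; right; exact: in_sigs_forI.
Qed.

Lemma step_count p s sn0 i0 : p \in C ->
  count (fun b => bundle_tag b == (sn0, i0)) (outs p s) + G sn0 i0 (lst p s)
    <= G sn0 i0 (lst p s.+1).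
Proof.
move=> Hp; rewrite /outs lstS /handle.
case E: (tr s) => [i' m sn|i' src [m sn j sigs] s' kk|b dst msg|] //=;
  case: eqP => [Hi|_] //=; subst i'.
- rewrite /G mysigs_add_sig /= delivered_add_sig /= has_key_rcons /tr_sn /tr_src /=.
  rewrite addn0 xpair_eqE.
  case: (boolP ((sn == sn0) && (p == i0))) => [/andP[/eqP E1 /eqP E2]|Hne].
    subst sn0 i0; rewrite orbT.
    case: (boolP (has_key sn p (mysigs (lst p s)))) => Hk.
      case/has_keyP: Hk => m' /(Down Hp) [s1 Hs1 E1].
      by have := Huniq E1 E; move=> Es; rewrite Es ltnn in Hs1.
    by case: (has_key sn p (delivered _)).
  by rewrite orbF add0n.
- exact: ob_count.
Qed.

Lemma sum_count p N sn0 i0 : p \in C ->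
  \sum_(s < N) count (fun b => bundle_tag b == (sn0, i0)) (outs p s) <= 2.
Proof.
move=> Hp.
have H : forall N, \sum_(s < N) count (fun b => bundle_tag b == (sn0, i0)) (outs p s)
   + G sn0 i0 (lst p 0) <= G sn0 i0 (lst p N).
  elim => [|N' IH]; first by rewrite big_ord0.
  rewrite big_ord_recr /= -addnA (addnC (count _ _)) addnA.
  apply: leq_trans (step_count N' sn0 i0 Hp).
  by rewrite addnC leq_add2l.
apply: leq_trans (leq_trans (leq_addr _ _) (H N)) _.
by rewrite /G; case: has_key; case: has_key.
Qed.

Lemma cardCD (D : {set 'I_n}) : #|C| - #|D| <= #|C :\: D|.
Proof.
rewrite cardsD leq_sub2l //; apply: subset_leq_card; exact: subsetIr.
Qed.

Lemma local_delivery i s0 m sn : 3 * t + 2 * d < n -> i \in C ->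
  tr s0 = Invoke i m sn -> exists p s, p \in C /\ dlv p s = Some (m, sn, i).
Proof.
move=> Hn Hi E0.
apply: NNPP => Hno.
pose x := (m, sn, i).
have : forall k, exists T, (exists s, x \in mysigs (lst k s)) -> x \in mysigs (lst k T).
  move=> k; case: (classic (exists s, x \in mysigs (lst k s))) => [[s Hs]|N].
    by exists s.
  by exists 0.
case/fchoice => fT HfT.
pose T := \max_(k : 'I_n) fT k.
pose Sg := [set k in C | x \in mysigs (lst k T)].
have HSg : forall k s, k \in C -> x \in mysigs (lst k s) -> k \in Sg.
  move=> k s Hk Hs; rewrite inE Hk /=.
  rewrite /T; apply: (mysigs_mono (t:=t) (tr:=tr) (@leq_bigmax _ fT k)); apply: HfT; by exists s.
have iSg : i \in Sg.
  by case: (step_invoke (t:=t) E0) => _ _ H _; apply: HSg H.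
have : forall k, exists D : {set 'I_n}, k \in Sg -> #|D| <= d /\
   forall r, r \in C -> r \notin D -> r \in Sg /\ exists s2, Rcv (fun _ => True) r m sn i k s2.
  move=> k; case: (boolP (k \in Sg)) => Hk; last by exists set0.
  have Hk' := Hk; rewrite inE in Hk'; case/andP: Hk' => HkC HkT.
  case: (SBL HkC HkT) => s' [kk [sgs [_ Ho Hks His]]].
  case: (Hma HkC Ho) => D [HD HR]; exists D => _; split => // r Hr HrD.
  case: (HR r Hr HrD) => s2 E2; split.
    exact: HSg Hr (signed (Hinv E0) E2 His).
  by exists s2, k, sgs, s', kk.
case/fchoice => fD HfD.
have := (@count_pig n Sg Sg (fun k => C :\: fD k) (#|C| - d) ((n + t) %/ 2)).
case.
- move=> k Hk; case: (HfD k Hk) => HD HR; split.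
    apply/subsetP => r; rewrite inE => /andP[HrD Hr]; by case: (HR r Hr HrD).
  apply: leq_trans (cardCD _); exact: leq_sub2l.
- have := half_facts (n + t); have : 0 < #|Sg| by apply/card_gt0P; exists i.
  move=> *; rewrite ltn_mul2l; apply/andP; split => //; lia.
move=> r HrS Hq.
have HrC : r \in C by move: HrS; rewrite inE => /andP[].
case: (@deliver_K r (fun _ => True) i m sn s0 [set p in Sg | r \in C :\: fD p]) => //.
- have := half_facts (n + t); lia.
- move=> k; rewrite inE => /andP[Hk]; rewrite inE => /andP[HrD _].
  by case: (HfD k Hk) => _ /(_ r HrC HrD) [].
move=> s [_ Hd]; apply: Hno; by exists r, s.
Qed.

Lemma wave (R : rcfType) (tau : nat -> R) i m sn s0 :
  unit_delay tr tau -> i \in C -> tr s0 = Invoke i m sn ->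
  exists D0 : {set 'I_n}, #|D0| <= d /\ forall k, k \in (C :\: D0) :|: [set i] ->
    exists D : {set 'I_n}, #|D| <= d /\ forall r, r \in C -> r \notin D ->
      exists s2, Rcv (fun s => (tau s <= tau s0 + 2)%R) r m sn i k s2.
Proof.
case=> Hmono Hdel Hi E0.
pose x := (m, sn, i).
case: (step_invoke (t:=t) E0) => Eo Hsv _ _.
have Ho0 : onth (outs i s0) 0 = Some (Bundle m sn i (sigs_for (lst i s0.+1) x)) by rewrite Eo.
have Hix : (i, x) \in sigs_for (lst i s0.+1) x by apply: in_sigs_forI.
case: (Hma Hi Ho0) => D0 [HD0 HR0]; exists D0; split => // k Hk.
have [HkC [s' [kk [sgs [Ht Ho Hks His]]]]] : k \in C /\ exists s' kk sgs,
   [/\ (tau s' <= tau s0 + 1)%R, onth (outs k s') kk = Some (Bundle m sn i sgs),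
       (k, x) \in sgs & (i, x) \in sgs].
  case/setUP: Hk => [|]; last first.
    rewrite inE => /eqP ->; split => //.
    by exists s0, 0, (sigs_for (lst i s0.+1) x); split => //; lra.
  rewrite inE => /andP[HkD HkC]; split => //.
  case: (HR0 k HkC HkD) => s2 E2.
  have T2 := Hdel _ _ _ _ _ _ E2.
  have Sg := signed Hi E2 Hix.
  case: (SBL HkC Sg) => s' [kk [sgs [Hs' Ho Hks His]]].
  exists s', kk, sgs; split => //.
  by rewrite -T2; apply: Hmono.
case: (Hma HkC Ho) => D [HD HR]; exists D; split => // r Hr HrD.
case: (HR r Hr HrD) => s3 E3; exists s3, k, sgs, s', kk; split => //.
rewrite (Hdel _ _ _ _ _ _ E3); lra.
Qed.

Lemma notin_small (D : {set 'I_n}) r : #|D| <= 0 -> r \notin D.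
Proof. by move=> H; apply/negP => Hr; move: H; rewrite leqn0 cards_eq0 => /eqP E; rewrite E inE in Hr. Qed.

Lemma timing3 (R : rcfType) (tau : nat -> R) i m sn s0 :
  3 * t + 2 * d < n ->
  unit_delay tr tau -> i \in C -> tr s0 = Invoke i m sn ->
  #|C| * ((n + t) %/ 2) < (#|C| - d) * (#|C| - d) ->
  delivered_within t tr C tau (#|C| - d) i m sn s0 3.
Proof.
move=> Hn Hud Hi E0 Hsq.
have [Hmono Hdel] := Hud.
pose x := (m, sn, i).
have [p [s [Hp Hts Hd]]] : exists p s, [/\ p \in C, (tau s <= tau s0 + 2)%R & dlv p s = Some x].
  case: (wave Hud Hi E0) => D0 [HD0 HW].
  pose Q := (C :\: D0) :|: [set i].
  have : forall k, exists D : {set 'I_n}, k \in Q -> #|D| <= d /\ forall r, r \in C ->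
     r \notin D -> exists s2, Rcv (fun s => (tau s <= tau s0 + 2)%R) r m sn i k s2.
    move=> k; case: (boolP (k \in Q)) => Hk; last by exists set0.
    by case: (HW k Hk) => D HD; exists D.
  case/fchoice => fD HfD.
  have := (@count_pig n Q C (fun k => C :\: fD k) (#|C| - d) ((n + t) %/ 2)).
  case.
  - move=> k Hk; case: (HfD k Hk) => HD _; split; first exact: subsetDl.
    apply: leq_trans (cardCD _); exact: leq_sub2l.
  - apply: (leq_trans Hsq); rewrite leq_mul2r; apply/orP; right.
    apply: leq_trans (leq_trans (leq_sub2l _ HD0) (cardCD D0)) _.
    apply: subset_leq_card; exact: subsetUl.
  move=> r Hr Hq.
  case: (@deliver_K r (fun s => (tau s <= tau s0 + 2)%R) i m sn s0
          [set k in Q | r \in C :\: fD k]) => //.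
  - move=> a b Hab Hb; apply: le_trans Hb; exact: Hmono.
  - have := half_facts (n + t); lia.
  - move=> k; rewrite inE => /andP[Hk]; rewrite inE => /andP[HrD _].
    by case: (HfD k Hk) => _ /(_ r Hr HrD).
  move=> s [Ps Ds]; by exists r, s.
case: (GD Hp Hd) => D [HD HR]; exists (C :\: D); split.
- exact: subsetDl.
- apply: leq_trans (cardCD _); exact: leq_sub2l.
- move=> q; rewrite inE => /andP[HqD HqC].
  case: (HR q HqC HqD) => s2 [b [kk [s3 [E2 Hs3 D3]]]].
  exists s3; split => //.
  have := Hmono _ _ Hs3; rewrite (Hdel _ _ _ _ _ _ E2); lra.
Qed.

Lemma timing2 (R : rcfType) (tau : nat -> R) i m sn s0 :
  3 * t + 2 * d < n -> d = 0 ->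
  unit_delay tr tau -> i \in C -> tr s0 = Invoke i m sn ->
  delivered_within t tr C tau (#|C| - d) i m sn s0 2.
Proof.
move=> Hn Hd0 Hud Hi E0.
have [Hmono Hdel] := Hud.
case: (wave Hud Hi E0) => D0 [HD0 HW].
exists C; split => //; first by rewrite leq_subr.
move=> r Hr.
case: (@deliver_K r (fun s => (tau s <= tau s0 + 2)%R) i m sn s0 C) => //.
- move=> a b Hab Hb; apply: le_trans Hb; exact: Hmono.
- have := half_facts (n + t); lia.
- move=> k Hk.
  have HkQ : k \in (C :\: D0) :|: [set i].
    rewrite inE; apply/orP; left; rewrite inE Hk andbT.
    by apply: notin_small; rewrite -Hd0.
  case: (HW k HkQ) => D [HD HR]; apply: HR => //.
  by apply: notin_small; rewrite -Hd0.
move=> s [Ps Ds]; by exists s.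
Qed.

Local Open Scope ring_scope.

Lemma all_props (R : rcfType) : (d < #|C|)%N -> (3 * t + 2 * d < n)%N ->
  let c := #|C| in
  let q := ((n + t) %/ 2)%N in
  [/\ [/\ mbrb_validity t tr C,
          mbrb_no_duplication t tr C,
          mbrb_no_duplicity t tr C,
          mbrb_local_delivery t tr C &
          mbrb_global_delivery t tr C (c - d)],
      (forall (tau : nat -> R) i m sn s0, unit_delay tr (R:=R) tau ->
         i \in C -> tr s0 = Invoke i m sn ->
         ((d%:R : R) < (c%:R - q%:R) / (q%:R + 1) ->
            delivered_within t tr C (R:=R) tau (c - d) i m sn s0 (2 : R)) /\
         ((d%:R : R) < c%:R - Num.sqrt (c%:R * ((n + t)%:R / 2)) ->
            delivered_within t tr C (R:=R) tau (c - d) i m sn s0 (3 : R)))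
    & forall i m sn s0 N, i \in C -> tr s0 = Invoke i m sn ->
         (msgs_sent t tr C sn i N <= 2 * n ^ 2)%N].
Proof.
move=> Hdc Hn c q.
have [Hq1 Hq2] := half_facts (n + t).
have HcN : (c <= n)%N by rewrite /c; have := max_card (mem C); rewrite card_ord.
split.
- split.
  + move=> p s m sn j _ Hj Hd; case: (validity Hj Hd) => s0 _ E; by exists s0.
  + move=> p s1 s2 m1 m2 sn j _; exact: no_dup.
  + move=> p q' s1 s2 m1 m2 sn j Hp Hq'; exact: no_duplicity Hct Hp Hq'.
  + move=> i s0 m sn Hi E0; exact: local_delivery Hn Hi E0.
  + move=> p s m sn j Hp Hd; case: (GD Hp Hd) => D [HD HR].
    exists (C :\: D); split.
    * exact: subsetDl.
    * apply: leq_trans (cardCD _); exact: leq_sub2l.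
    * move=> r; rewrite inE => /andP[HrD Hr].
      case: (HR r Hr HrD) => s2 [b [kk [s3 [_ _ D3]]]]; by exists s3.
- move=> tau i m sn s0 Hud Hi E0; split.
  + move=> Hlt; apply: timing2 => //.
    have H1 : (c%:R - q%:R) / (q%:R + 1) <= (1 : R).
      rewrite ler_pdivrMr; last by rewrite ltr_wpDl.
      have : (c <= q + q + 1)%N by lia.
      rewrite -(ler_nat R) !natrD /=; lra.
    have : (d%:R : R) < 1%:R by apply: lt_le_trans Hlt H1.
    by rewrite ltr_nat ltnS leqn0 => /eqP.
  + move=> Hlt; apply: timing3 => //.
    have Hdc' : (d <= c)%N by apply: ltnW.
    set a : R := c%:R * ((n + t)%:R / 2).
    have Ha : 0 <= a by rewrite /a mulr_ge0 // divr_ge0.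
    have Hs : Num.sqrt a ^+ 2 = a by rewrite sqr_sqrtr.
    have Hs0 : 0 <= Num.sqrt a by apply: sqrtr_ge0.
    have Hqa : (c * q)%:R <= a.
      rewrite natrM /a ler_pM2l ?ler_pdivlMr //; last first.
        by rewrite ltr0n; apply: leq_ltn_trans Hdc.
      by rewrite -natrM ler_nat mulnC.
    rewrite -/c -/q -(ltr_nat R); apply: (le_lt_trans Hqa).
    rewrite natrM natrB //.
    move: Hs; rewrite expr2 => Hs.
    nra.
- move=> i m sn s0 N Hi E0; rewrite /msgs_sent.
  apply: (@leq_trans (\sum_(p in C) (n * 2))%N).
    apply: leq_sum => p Hp; rewrite -big_distrr /= leq_mul2l.
    by rewrite sum_count ?orbT.
  rewrite sum_nat_const.
  apply: (@leq_trans (n * (n * 2))%N); first by rewrite leq_mul2r HcN orbT.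
  by rewrite mulnA mulnC mulnn.
Qed.

End Main.

Local Open Scope ring_scope.

Theorem theorem1 (R : rcfType) (M : eqType) (n t d : nat) (C : {set 'I_n})
    (tr : nat -> event M n) :
  (n - t <= #|C|)%N -> (d < #|C|)%N ->
  (3 * t + 2 * d < n)%N ->
  admissible t tr d C ->
  let c := #|C| in
  let q := ((n + t) %/ 2)%N in
  [/\ [/\ mbrb_validity t tr C,
          mbrb_no_duplication t tr C,
          mbrb_no_duplicity t tr C,
          mbrb_local_delivery t tr C &
          mbrb_global_delivery t tr C (c - d)],
      (forall (tau : nat -> R) i m sn s0, unit_delay tr (R:=R) tau ->
         i \in C -> tr s0 = Invoke i m sn ->
         ((d%:R : R) < (c%:R - q%:R) / (q%:R + 1) ->
            delivered_within t tr C (R:=R) tau (c - d) i m sn s0 (2 : R)) /\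
         ((d%:R : R) < c%:R - Num.sqrt (c%:R * ((n + t)%:R / 2)) ->
            delivered_within t tr C (R:=R) tau (c - d) i m sn s0 (3 : R)))
    & forall i m sn s0 N, i \in C -> tr s0 = Invoke i m sn ->
         (msgs_sent t tr C sn i N <= 2 * n ^ 2)%N].
Proof.
move=> Hct Hdc Hn Hadm.
case: Hadm => Hinv [Huniq [Hnet [_ [Hbyz Hma]]]].
exact: (all_props Hinv Huniq Hnet Hbyz Hma Hct R Hdc Hn).
Qed.
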